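(* Let $U$ be a countably infinite universe, $\mathcal{C}=(L_1,L_2,\ldots)$ a countably infinite collection of languages over $U$, and let $m^\star_n(L_j)$ be computed by the Noisy Procedure in the context. Suppose that for every $t\in\mathbb{N}$ the set $\{(n',j): m^\star_{n'}(L_j)+1\le t\}$ is finite. Then there exists an algorithm that noisily non-uniformly generates from $\mathcal{C}$ with generation times forming a Pareto-optimal family.
   Context: A language is an infinite subset of $U$; a collection is a sequence of languages (repetitions allowed, entries distinguished by index). For a language $L$ and integer $n\ge0$, an enumeration of $L$ at noise level $n$ is a sequence $x_1,x_2,\ldots$ of elements of $U$ such that every $x\in L$ equals some $x_t$ and $\sum_{t\ge1}\mathbf{1}[x_t\notin L]\le n$. A generating algorithm at each time $t\ge1$ receives $x_1,\ldots,x_t$ and outputs $z_t\in U$; $S_t$ is the set of distinct strings among $x_1,\ldots,x_t$. For a set $T$, language $L$ and integer $a\ge0$, $T$ is $a$-contained in $L$ if $\sum_{x\in T}\mathbf{1}[x\notin L]\le a$. An algorithm noisily non-uniformly generates from $\mathcal{C}$ with (finite) generation times $t_n(L_i)$ if for all $n\ge0$, $i\ge1$ and every enumeration of $L_i$ at noise level $n$, $z_t\in L_i\setminus S_t$ whenever $|S_t|\ge t_n(L_i)$; for an algorithm $\mathcal{G}$, $t_{n,\mathcal{G}}(L_i)$ is the least such value ($\infty$ if none). A family $(t_n(L_i))_{n\ge0,i\ge1}$ is Pareto-optimal if every algorithm $\mathcal{G}$ that noisily non-uniformly generates from $\mathcal{C}$ and satisfies $t_{n,\mathcal{G}}(L_i)<t_n(L_i)$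 for some pair $(n,i)$ also satisfies $t_{n',\mathcal{G}}(L_j)>t_{n'}(L_j)$ for some other pair $(n',j)$. Diagonal order: pairs $(n,i)$ ordered as $(0,1),(1,1),(0,2),(2,1),(1,2),(0,3),\ldots$, i.e. for $n'=0,1,2,\ldots$ and $h=0,\ldots,n'$ the pair $(n'-h,h+1)$. Each pair $(a,b)$ has an entry $L_{a,b}$, a copy of $L_b$ labelled $(a,b)$. Noisy Procedure. Set $\mathcal{C}'_0=()$. For $l=1,2,\ldots$, let $(n,i)$ be the $l$-th pair; append $L_{n,i}$ to the end of $\mathcal{C}'_{l-1}$ to get $\mathcal{C}'_l=(L'_1,\ldots,L'_l)$, set $j=l$. Repeat: (A) let $T$ be a finite subset of $U$ of largest size for which there is a subcollection $\mathcal{D}$ of the entries $(L'_1,\ldots,L'_j)$ including $L'_j$, such that $T$ is $a$-contained in $L_b$ for every entry $L_{a,b}\in\mathcal{D}$ and $\bigcap_{L_{a,b}\in\mathcal{D}}L_b$ is finite; $m_{\mathrm{chk}}=|T|$ ($0$ if no such $\mathcal{D}$ exists). (B) If $j\le1$ or $m_{\mathrm{chk}}>m^\star_a(L_b)$ where $L'_{j-1}=L_{a,b}$, stop. (C) Otherwise swap positions $j-1$, $j$, set $j\leftarrow j-1$, return to (A). On stopping, set $m^\star_n(L_i)=m_{\mathrm{chk}}$. *)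

(* Defs.v *)
From Stdlib Require Import ClassicalEpsilon.
From mathcomp Require Import all_boot.

Set Implicit Arguments.
Unset Strict Implicit.
Unset Printing Implicit Defensive.

(* Conventions: languages are predicates U -> Prop; a collection is a sequence
   C : nat -> (U -> Prop), with C i (0-indexed) standing for the paper's L_{i+1}.
   Enumerations x : nat -> U are 0-indexed: x k is the paper's x_{k+1}; the
   paper's prefix x_1..x_t is [seq x k | k <- iota 0 t] = mkseq x t. *)

Section Defs.
Variable U : countType.

Definition infinite_lang (L : U -> Prop) : Prop :=
  forall s : seq U, exists x, L x /\ x \notin s.

(* sum_{t} 1[x_t \notin L] <= n, phrased with distinct indices *)
Definition noise_le (L : U -> Prop) (n : nat) (x : nat -> U) : Prop :=
  forall s : seq nat, uniq s -> (forall t, t \in s -> ~ L (x t)) -> size s <= n.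

Definition enumeration (L : U -> Prop) (n : nat) (x : nat -> U) : Prop :=
  (forall y, L y -> exists t, x t = y) /\ noise_le L n x.

Definition prefix (x : nat -> U) (t : nat) : seq U := mkseq x t.

Definition algorithm := seq U -> U.

Definition works_at (C : nat -> U -> Prop) (G : algorithm) (n i m : nat) : Prop :=
  forall x, enumeration (C i) n x ->
  forall t, 1 <= t -> m <= size (undup (prefix x t)) ->
    C i (G (prefix x t)) /\ G (prefix x t) \notin prefix x t.

Definition generates_with (C : nat -> U -> Prop) (G : algorithm)
  (tt : nat -> nat -> nat) : Prop :=
  forall n i, works_at C G n i (tt n i).

Definition generates (C : nat -> U -> Prop) (G : algorithm) : Prop :=
  exists tt, generates_with C G tt.

Definition least_time (C : nat -> U -> Prop) (G : algorithm) (n i m : nat) : Prop :=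
  works_at C G n i m /\ forall k, works_at C G n i k -> m <= k.

(* Pareto-optimality of the family tt.  For an algorithm G that generates,
   every t_{n,G}(L_i) is finite, hence given by least_time. *)
Definition pareto_optimal (C : nat -> U -> Prop) (tt : nat -> nat -> nat) : Prop :=
  forall G : algorithm, generates C G ->
  forall n i m, least_time C G n i m -> m < tt n i ->
  exists n' j m', (n', j) <> (n, i) /\ least_time C G n' j m' /\ tt n' j < m'.

Definition a_contained (T : seq U) (L : U -> Prop) (a : nat) : Prop :=
  forall s : seq U, uniq s -> {subset s <= T} -> (forall y, y \in s -> ~ L y) ->
    size s <= a.

(* Candidate sizes in step (A): pre = (L'_1, ..., L'_j) as labels (a,b),
   the entry L'_j being the last one.  A subcollection D is a set of entries
   of pre containing L'_j. *)
Definition chk_size (C : nat -> U -> Prop) (pre : seq (nat * nat)) (k : nat) : Prop :=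
  k = 0 \/
  exists (T : seq U) (D : seq (nat * nat)),
    [/\ uniq T, size T = k,
        {subset D <= pre} /\ last (0, 0) pre \in D,
        (forall ab, ab \in D -> a_contained T (C ab.2) ab.1) &
        (exists F : seq U, forall y, (forall ab, ab \in D -> C ab.2 y) -> y \in F)].

Definition mchk (C : nat -> U -> Prop) (pre : seq (nat * nat)) : nat :=
  epsilon (inhabits 0%N)
    (fun m => chk_size C pre m /\ forall k, chk_size C pre k -> k <= m).

Definition swap_at (s : seq (nat * nat)) (k : nat) : seq (nat * nat) :=
  set_nth (0, 0) (set_nth (0, 0) s k (nth (0, 0) s k.+1)) k.+1 (nth (0, 0) s k).

(* Steps (A)-(C) starting from position j (1-indexed) in list s, with
   ms the already computed values of m^star.  Returns the final list and the
   value m_chk at stopping time. *)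
Fixpoint insert_loop (C : nat -> U -> Prop) (ms : nat * nat -> nat)
  (s : seq (nat * nat)) (j : nat) {struct j} : seq (nat * nat) * nat :=
  match j with
  | (k.+1 as j').+1 =>
      let m := mchk C (take k.+2 s) in
      (* L'_{j-1} is at 0-indexed position k *)
      if ms (nth (0, 0) s k) < m then (s, m)
      else insert_loop C ms (swap_at s k) j'
  | _ => (s, mchk C (take j s))
  end.

(* the diagonal order: (0,1),(1,1),(0,2),(2,1),(1,2),(0,3),...;
   with 0-indexed languages: (n'-h, h) for n' = 0,1,..., h = 0..n'. *)
Definition diag_list (K : nat) : seq (nat * nat) :=
  flatten [seq [seq (n' - h, h) | h <- iota 0 n'.+1] | n' <- iota 0 K].

Definition diag (l : nat) : nat * nat := nth (0, 0) (diag_list l.+1) l.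

(* state after l rounds: the collection C'_l and the values m^star assigned so far *)
Fixpoint noisy_proc (C : nat -> U -> Prop) (l : nat)
  : seq (nat * nat) * (nat * nat -> nat) :=
  match l with
  | 0 => ([::], fun _ => 0)
  | l'.+1 =>
      let st := noisy_proc C l' in
      let e := diag l' in
      let res := insert_loop C st.2 (rcons st.1 e) (size st.1).+1 in
      (res.1, fun p => if p == e then res.2 else st.2 p)
  end.

Definition diag_index (n i : nat) : nat := ((n + i) * (n + i).+1) %/ 2 + i.

Definition mstar (C : nat -> U -> Prop) (n i : nat) : nat :=
  (noisy_proc C (diag_index n i).+1).2 (n, i).

End Defs.

(* Main.v *)
Require Import Defs.
From mathcomp Require Import all_boot.
From mathcomp Require zify.
From Stdlib Require Import ClassicalEpsilon Classical Lia.

Set Implicit Arguments.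
Unset Strict Implicit.
Unset Printing Implicit Defensive.

Definition pb (P : Prop) : bool := if excluded_middle_informative P then true else false.
Lemma pbP (P : Prop) : reflect P (pb P).
Proof. rewrite /pb; case: excluded_middle_informative => h; constructor; done. Qed.

Fixpoint subs (T : Type) (s : seq T) : seq (seq T) :=
  if s is x :: s' then subs s' ++ map (cons x) (subs s') else [:: [::]].

Lemma subs_ex (T : eqType) (s D : seq T) : {subset D <= s} ->
  exists D', D' \in subs s /\ D' =i D.
Proof.
elim: s D => [|x s IH] D sub.
  exists [::]; split => //= y; apply/idP/idP => //; by move/sub.
have sub0 : {subset filter (predC1 x) D <= s}.
  move=> y; rewrite mem_filter => /andP [ne /sub]; rewrite in_cons.
  by case/orP => // /eqP e; move: ne; rewrite e /= eqxx.
have [D0 [inD0 eqD0]] := IH _ sub0.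
case xD: (x \in D).
  exists (x :: D0); split; first by rewrite /= mem_cat map_f ?orbT.
  move=> y; rewrite in_cons eqD0 mem_filter /=.
  case: (eqVneq y x) => [->|] //=.
exists D0; split; first by rewrite /= mem_cat inD0.
move=> y; rewrite eqD0 mem_filter /=.
case: (eqVneq y x) => [->|] //=; by rewrite xD.
Qed.

Lemma mem_sumn (T : eqType) (f : T -> nat) (s : seq T) x : x \in s -> f x <= sumn (map f s).
Proof.
elim: s => //= y s IH; rewrite in_cons => /orP [/eqP ->|/IH h]; first exact: leq_addr.
exact: (leq_trans h (leq_addl _ _)).
Qed.

Lemma sumn_le (T : eqType) (f g : T -> nat) (s : seq T) :
  (forall x, x \in s -> f x <= g x) -> sumn (map f s) <= sumn (map g s).
Proof.
elim: s => //= y s IH h; apply: leq_add; first by apply: h; rewrite in_cons eqxx.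
by apply: IH => x xs; apply: h; rewrite in_cons xs orbT.
Qed.

Lemma sumn_le_all (T : Type) (f g : T -> nat) (s : seq T) :
  (forall x, f x <= g x) -> sumn (map f s) <= sumn (map g s).
Proof. move=> h; elim: s => //= y s IH; exact: leq_add. Qed.

Lemma count_cover (T : eqType) (ps : seq (pred T)) (S F : seq T) :
  uniq S -> (forall y, y \in S -> y \in F \/ has (fun p : pred T => p y) ps) ->
  size S <= size F + sumn (map (fun p => count p S) ps).
Proof.
elim: ps S => [|p ps IH] S uS h /=.
  rewrite addn0; apply: uniq_leq_size => // y yS; by case: (h y yS).
rewrite -(count_predC p S) addnCA leq_add2l.
have := IH (filter (predC p) S) (filter_uniq _ uS).
rewrite size_filter => H; apply: leq_trans (H _) _.
  move=> y; rewrite mem_filter => /andP [npy yS]; case: (h y yS) => [->|]; first by left.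
  by rewrite /= (negbTE npy) /=; right.
rewrite leq_add2l; apply: sumn_le_all => q; rewrite count_filter; apply: sub_count.
by move=> y /andP [].
Qed.

Lemma mem_split (T : eqType) (x : T) s : x \in s -> exists s1 s2, s = s1 ++ x :: s2.
Proof.
elim: s => //= y s IH; rewrite in_cons => /orP [/eqP ->|/IH [s1 [s2 ->]]].
  by exists [::], s.
by exists (y :: s1), s2.
Qed.

Lemma split3 (T : Type) (A B P Q : seq T) e x : A ++ e :: B = P ++ x :: Q ->
  (exists A2, A = P ++ x :: A2 /\ Q = A2 ++ e :: B) \/
  (P = A /\ x = e /\ Q = B) \/
  (exists B1, P = A ++ e :: B1 /\ B = B1 ++ x :: Q).
Proof.
elim: A P => [|a A IH] [|p P] /= [] h1 h2.
- by right; left; subst.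
- by right; right; exists P; subst.
- by left; exists A; subst.
- subst; case: (IH _ h2) => [[A2 [-> ->]]|[[-> [-> ->]]|[B1 [-> ->]]]].
  + by left; exists A2.
  + by right; left.
  + by right; right; exists B1.
Qed.

Lemma swap_at_cat (A B : seq (nat * nat)) x y :
  swap_at (A ++ x :: y :: B) (size A) = A ++ y :: x :: B.
Proof. by elim: A => //= a A; rewrite /swap_at /= => ->. Qed.

Lemma last_in (T : eqType) (D s : seq T) : D != [::] -> {subset D <= s} ->
  exists P e Q, [/\ s = P ++ e :: Q, e \in D & {subset D <= rcons P e}].
Proof.
move=> nD; elim/last_ind: s => [|s x IH] sub.
  by case: D nD sub => // d D _ /(_ d); rewrite in_cons eqxx => /(_ isT).
case xD: (x \in D).
  exists s, x, [::]; split => //; by rewrite cats1.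
have sub' : {subset D <= s}.
  move=> y yD; move: (sub y yD); rewrite mem_rcons in_cons => /orP [/eqP e|] //.
  by move: xD; rewrite -e yD.
have [P [e [Q [-> eD sD]]]] := IH sub'.
exists P, e, (rcons Q x); split => //; by rewrite rcons_cat.
Qed.

Definition tri n := n * n.+1 %/ 2.
Lemma triS n : tri n.+1 = tri n + n.+1.
Proof. rewrite /tri; lia. Qed.
Lemma tri_ge n : n <= tri n.
Proof. rewrite /tri; elim: n => // n IH; have := triS n; rewrite /tri; lia. Qed.

Lemma diag_listS K : diag_list K.+1 = diag_list K ++ [seq (K - h, h) | h <- iota 0 K.+1].
Proof. rewrite /diag_list -[in LHS]addn1 iotaD map_cat flatten_cat; congr (_ ++ _); by rewrite /= cats0 add0n. Qed.

Lemma size_diag_list K : size (diag_list K) = tri K.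
Proof.
elim: K => // K IH; rewrite diag_listS size_cat IH size_map size_iota triS //.
Qed.

Lemma nth_diag_list K n h : n < K -> h <= n ->
  nth (0, 0) (diag_list K) (tri n + h) = (n - h, h).
Proof.
elim: K => // K IH; rewrite ltnS leq_eqVlt => /orP [/eqP ->|lt] hn; rewrite diag_listS nth_cat size_diag_list.
  have -> : (tri K + h < tri K) = false by rewrite ltnNge leq_addr.
  rewrite addKn (nth_map 0); last by rewrite size_iota; lia.
  by rewrite nth_iota //; lia.
have -> : tri n + h < tri K.
  have := triS n; have : tri n.+1 <= tri K.
    elim: K lt {IH} => // K IHK; rewrite ltnS leq_eqVlt => /orP [/eqP ->|l] //.
    rewrite (triS K); have := IHK l; lia.
  lia.
exact: IH.
Qed.

Lemma diag_of_index n i : diag (diag_index n i) = (n, i).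
Proof.
rewrite /diag /diag_index -/(tri (n + i)).
rewrite nth_diag_list; first by rewrite addnK.
- have := tri_ge (n + i); lia.
- exact: leq_addl.
Qed.

Lemma index_surj l : exists n i, diag_index n i = l.
Proof.
suff [n [h [hn ->]]] : exists n h, h <= n /\ l = tri n + h.
  by exists (n - h), h; rewrite /diag_index subnK.
elim: l => [|l [n [h [hn ->]]]]; first by exists 0, 0.
case: (ltnP h n) => hn'.
  by exists n, h.+1; split => //; rewrite addnS.
exists n.+1, 0; split => //; rewrite triS; lia.
Qed.

Lemma index_of_diag l : diag_index (diag l).1 (diag l).2 = l.
Proof. by have [n [i <-]] := index_surj l; rewrite diag_of_index. Qed.

Lemma diag_inj l1 l2 : diag l1 = diag l2 -> l1 = l2.
Proof. by move=> e; rewrite -(index_of_diag l1) -(index_of_diag l2) e. Qed.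

Ltac memsolve := let h := fresh "h" in move=> h; repeat (case/orP: h => h); rewrite ?h ?orbT //.

Definition gcov (U : countType) (C : nat -> U -> Prop) (D : seq (nat * nat)) : nat :=
  epsilon (inhabits 0) (fun n => exists F : seq U, size F = n /\
     forall y, (forall ab, ab \in D -> C ab.2 y) -> y \in F).

Definition bnd (U : countType) (C : nat -> U -> Prop) pre :=
  sumn (map (gcov C) (subs pre)) + sumn (map fst pre).

Lemma chk_bound (U : countType) (C : nat -> U -> Prop) pre k :
  chk_size C pre k -> k <= bnd C pre.
Proof.
case=> [->//|[T [D [uT sT [sub lD] aC [F cF]]]]].
have [D' [inD' eqD']] := subs_ex sub.
have exF : exists n, exists F' : seq U, size F' = n /\
     forall y, (forall ab, ab \in D' -> C ab.2 y) -> y \in F'.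
  exists (size F), F; split => // y h; apply: cF => ab abD; apply: h; by rewrite eqD'.
have [F' [sF' cF']] := epsilon_spec (inhabits 0) _ exF.
rewrite -sT.
apply: leq_trans (count_cover (ps := map (fun ab (y : U) => (ab \in D) && ~~ pb (C ab.2 y)) pre) (F := F') uT _) _.
  move=> y yT; case: (pbP (forall ab, ab \in D' -> C ab.2 y)) => [h|h]; first by left; exact: cF'.
  right; have [ab [abD nC]] : exists ab, ab \in D' /\ ~ C ab.2 y.
    apply: NNPP => hn; apply: h => ab abD; apply: NNPP => hc; apply: hn; by exists ab.
  rewrite has_map; apply/hasP; exists ab; first by apply: sub; rewrite -eqD'.
  by rewrite /= -eqD' abD /=; apply/negP => /pbP.
rewrite /bnd; apply: leq_add.
  rewrite sF'; exact: (mem_sumn (gcov C) inD').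
rewrite -map_comp; apply: sumn_le => ab abpre /=.
case abD: (ab \in D) => /=; last by rewrite (eq_count (a2 := pred0)) ?count_pred0.
rewrite -size_filter; apply: aC => //; first exact: filter_uniq.
  by move=> y; rewrite mem_filter => /andP [].
by move=> y; rewrite mem_filter => /andP [/pbP h _].
Qed.

Lemma mchk_spec (U : countType) (C : nat -> U -> Prop) pre :
  chk_size C pre (mchk C pre) /\ forall k, chk_size C pre k -> k <= mchk C pre.
Proof.
suff ex : exists m, chk_size C pre m /\ forall k, chk_size C pre k -> k <= m.
  exact: (epsilon_spec (inhabits 0) _ ex).
pose P := fun k => pb (chk_size C pre k).
have exP : exists i, P i by exists 0; apply/pbP; left.
have ubP : forall i, P i -> i <= bnd C pre by move=> i /pbP; exact: chk_bound.
case: (ex_maxnP exP ubP) => m /pbP Pm maxm.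
by exists m; split => // k /pbP; exact: maxm.
Qed.

Lemma chk_mono (U : countType) (C : nat -> U -> Prop) pre pre' k :
  chk_size C pre k -> {subset pre <= pre'} -> last (0, 0) pre = last (0, 0) pre' ->
  chk_size C pre' k.
Proof.
case=> [->|[T [D [uT sT [sub lD] aC cF]]]] sp lp; first by left.
right; exists T, D; split => //; split; first by move=> x /sub /sp.
by rewrite -lp.
Qed.

Lemma mchk_mono (U : countType) (C : nat -> U -> Prop) pre pre' :
  {subset pre <= pre'} -> last (0, 0) pre = last (0, 0) pre' -> mchk C pre <= mchk C pre'.
Proof.
move=> sp lp; have [h _] := mchk_spec C pre; have [_ h'] := mchk_spec C pre'.
by apply: h'; apply: chk_mono h sp lp.
Qed.

Lemma chk_split (U : countType) (C : nat -> U -> Prop) (A B1 : seq (nat * nat)) e x k :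
  chk_size C (rcons (A ++ e :: B1) x) k ->
  chk_size C (A ++ B1 ++ [:: x; e]) k \/ chk_size C (rcons (A ++ B1) x) k.
Proof.
case=> [->|[T [D [uT sT [sub lD] aC cF]]]]; first by left; left.
rewrite last_rcons in lD.
case eD: (e \in D).
  left; right; exists T, D; split => //; split; last by rewrite !last_cat.
  move=> y /sub; rewrite !(mem_rcons, mem_cat, in_cons, in_nil).
  by memsolve.
right; right; exists T, D; split => //; split; last by rewrite last_rcons.
move=> y yD; have ne : y != e by apply/eqP => h; move: eD; rewrite -h yD.
move: (sub y yD); rewrite !(mem_rcons, mem_cat, in_cons) (negbTE ne) /=.
by memsolve.
Qed.

Lemma insert_loopSS (U : countType) (C : nat -> U -> Prop) ms s k :
  insert_loop C ms s k.+2 =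
  if ms (nth (0, 0) s k) < mchk C (take k.+2 s) then (s, mchk C (take k.+2 s))
  else insert_loop C ms (swap_at s k) k.+1.
Proof. by []. Qed.

Lemma loopP (U : countType) (C : nat -> U -> Prop) ms e : forall k (A B : seq (nat * nat)),
  size A = k ->
  (forall B1 b B2, B = B1 ++ b :: B2 -> mchk C (A ++ B1 ++ [:: b; e]) <= ms b) ->
  exists A' B', [/\ (insert_loop C ms (A ++ e :: B) k.+1).1 = A' ++ e :: B',
     A' ++ B' = A ++ B,
     (insert_loop C ms (A ++ e :: B) k.+1).2 = mchk C (rcons A' e),
     (A' = [::] \/ ms (last (0, 0) A') < (insert_loop C ms (A ++ e :: B) k.+1).2) &
     (forall B1 b B2, B' = B1 ++ b :: B2 -> mchk C (A' ++ B1 ++ [:: b; e]) <= ms b)].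
Proof.
elim=> [|k IH] A B sA hB.
  case: A sA hB => // _ hB; exists [::], B; split; [by [] | by [] | by rewrite /= take0 | by left | by []].
case/lastP: A sA hB => [//|A0 p] sA hB.
have sA0 : size A0 = k by move: sA; rewrite size_rcons => -[].
rewrite cat_rcons insert_loopSS.
have Ht : take k.+2 (A0 ++ p :: e :: B) = A0 ++ [:: p; e].
  by rewrite -[p :: _]/([:: p; e] ++ B) catA take_size_cat // size_cat sA0 addn2.
have Hn : nth (0, 0) (A0 ++ p :: e :: B) k = p by rewrite nth_cat sA0 ltnn subnn.
rewrite Ht Hn; case: ifP => hlt.
  exists (rcons A0 p), B; split => //.
  - by rewrite cat_rcons.
  - by rewrite -!cats1 -catA.
  - by right; rewrite last_rcons.
have Hs : swap_at (A0 ++ p :: e :: B) k = A0 ++ e :: p :: B by rewrite -sA0 swap_at_cat.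
rewrite Hs.
have := IH A0 (p :: B) sA0.
case.
  move=> [|b1 B1] b B2 /= [].
    move=> <- _; by rewrite leqNgt hlt.
  move=> <- eB; have := hB _ _ _ eB; by rewrite cat_rcons.
move=> A' [B' [h1 h2 h3 h4 h5]]; exists A', B'; split => //.
by rewrite h2 cat_rcons.
Qed.

Definition upd (ms : nat * nat -> nat) e m := fun p => if p == e then m else ms p.

Definition CB (U : countType) (C : nat -> U -> Prop) (ms : nat * nat -> nat) s :=
  forall P x Q, s = P ++ x :: Q -> forall k, chk_size C (rcons P x) k -> k <= ms x.

Lemma pw_last (ms : nat * nat -> nat) A f : pairwise leq (map ms A) -> f \in A ->
  ms f <= ms (last (0, 0) A).
Proof.
case/lastP: A => // A0 p; rewrite last_rcons -cats1 map_cat pairwise_cat.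
case/and3P => /allrelP ar _ _; rewrite mem_cat in_cons in_nil orbF.
case/orP => [fA|/eqP -> //].
by apply: ar; [exact: map_f | rewrite /= in_cons eqxx].
Qed.

Lemma roundP (U : countType) (C : nat -> U -> Prop) ms s e s' m :
  e \notin s -> pairwise leq (map ms s) -> CB C ms s ->
  insert_loop C ms (rcons s e) (size s).+1 = (s', m) ->
  [/\ pairwise leq (map (upd ms e m) s'), CB C (upd ms e m) s' &
    exists A' B', [/\ s' = A' ++ e :: B', A' ++ B' = s, m = mchk C (rcons A' e) &
       forall f, f \in A' -> ms f < m]].
Proof.
move=> eS pw cb E.
have := @loopP U C ms e (size s) s [::] erefl.
case; first by move=> [|? ?] ? ? [].
rewrite cats1 E /= => A' [B' [h1 h2 h3 h4 h5]].
rewrite cats0 in h2.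
have old : forall y, y \in s -> upd ms e m y = ms y.
  by move=> y ys; rewrite /upd; case: eqP => // ey; move: eS; rewrite -ey ys.
have pw' := pw; rewrite -h2 map_cat pairwise_cat in pw'; case/and3P: pw' => ar pA pB.
have hAm : forall f, f \in A' -> ms f < m.
  move=> f fA; case: h4 => [eA|lt]; first by move: fA; rewrite eA.
  exact: leq_ltn_trans (pw_last pA fA) lt.
split.
- have mA : map (upd ms e m) A' = map ms A'.
    by apply/eq_in_map => y yA; apply: old; rewrite -h2 mem_cat yA.
  have mB : map (upd ms e m) B' = map ms B'.
    by apply/eq_in_map => y yB; apply: old; rewrite -h2 mem_cat yB orbT.
  have me : upd ms e m e = m by rewrite /upd eqxx.
  rewrite h1 map_cat /= mA mB me pairwise_cat pairwise_cons allrel_consr ar pA pB andbT /= andbT.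
  apply/andP; split.
    by apply/allP => z /mapP [f fA ->]; exact: ltnW (hAm f fA).
  + apply/allP => z /mapP [b bB ->]; have [B1 [B2 eB]] := mem_split bB.
    apply: leq_trans (h5 _ _ _ eB); rewrite h3; apply: mchk_mono; last by rewrite last_rcons !last_cat.
    move=> y; rewrite !(mem_rcons, mem_cat, in_cons, in_nil).
    by memsolve.
- move=> P x Q; rewrite h1 => /(@split3 _ A' B' P Q e x) [[A2 [eA eQ]]|[[eP [ex eQ]]|[B1 [eP eB]]]] k hk.
  + have xs : x \in s by rewrite -h2 eA !(mem_cat, in_cons) eqxx /= orbT.
    rewrite old //; apply: (cb P x (A2 ++ B')) hk.
    by rewrite -h2 eA -catA.
  + subst; rewrite /upd eqxx; exact: (proj2 (mchk_spec C _)).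
  + have xs : x \in s by rewrite -h2 eB !(mem_cat, in_cons) eqxx /= !orbT.
    rewrite old //; rewrite eP in hk; case: (chk_split hk) => hk'.
      apply: leq_trans (h5 _ _ _ eB); exact: (proj2 (mchk_spec C _)).
    apply: (cb (A' ++ B1) x Q) hk'; by rewrite -h2 eB catA.
- by exists A', B'; split.
Qed.

Lemma noisy_procS (U : countType) (C : nat -> U -> Prop) l : noisy_proc C l.+1 =
  ((insert_loop C (noisy_proc C l).2 (rcons (noisy_proc C l).1 (diag l)) (size (noisy_proc C l).1).+1).1,
   upd (noisy_proc C l).2 (diag l)
     (insert_loop C (noisy_proc C l).2 (rcons (noisy_proc C l).1 (diag l)) (size (noisy_proc C l).1).+1).2).
Proof. by []. Qed.

Lemma invP (U : countType) (C : nat -> U -> Prop) l :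
  [/\ pairwise leq (map (noisy_proc C l).2 (noisy_proc C l).1), CB C (noisy_proc C l).2 (noisy_proc C l).1 &
      forall x, x \in (noisy_proc C l).1 <-> exists2 l', l' < l & diag l' = x].
Proof.
elim: l => [|l [pw cb mem]].
  split => //=; first by move=> [|? ?] ? ? [].
  by move=> x; split => // [[]].
rewrite noisy_procS.
case E: (insert_loop _ _ _ _) => [s' m] /=.
have eS : diag l \notin (noisy_proc C l).1.
  apply/negP => /mem [l' lt /diag_inj e]; by move: lt; rewrite e ltnn.
have [pw' cb' [A' [B' [h1 h2 _ _]]]] := roundP eS pw cb E.
split => // x; rewrite h1 mem_cat in_cons orbCA -mem_cat h2; split.
  case/orP => [/eqP ->|/mem [l' lt <-]]; first by exists l.
  by exists l' => //; exact: ltnW.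
move=> [l' lt <-]; move: lt; rewrite ltnS leq_eqVlt => /orP [/eqP ->|lt].
  by rewrite eqxx.
by apply/orP; right; apply/mem; exists l'.
Qed.

Lemma ms_stable (U : countType) (C : nat -> U -> Prop) l l' : l' < l ->
  (noisy_proc C l).2 (diag l') = (noisy_proc C l'.+1).2 (diag l').
Proof.
elim: l => // l IH; rewrite ltnS leq_eqVlt => /orP [/eqP -> //| lt].
rewrite noisy_procS /= /upd; case: eqP => [/diag_inj e|_]; last exact: IH.
by move: lt; rewrite e ltnn.
Qed.

Lemma ms_mstar (U : countType) (C : nat -> U -> Prop) l x : x \in (noisy_proc C l).1 ->
  (noisy_proc C l).2 x = mstar C x.1 x.2.
Proof.
have [_ _ mem] := invP C l.
move/mem => [l' lt <-]; rewrite ms_stable // /mstar index_of_diag.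
by rewrite -surjective_pairing.
Qed.

Lemma least_exists (U : countType) (C : nat -> U -> Prop) (G : algorithm U) n i k :
  works_at C G n i k -> exists m, least_time C G n i m.
Proof.
move=> wk; pose P := fun k => pb (works_at C G n i k).
have exP : exists k, P k by exists k; apply/pbP.
case: (ex_minnP exP) => m /pbP Pm minm.
by exists m; split => // k' /pbP; exact: minm.
Qed.

Lemma enum_from (U : countType) (L : U -> Prop) a (T : seq U) :
  infinite_lang L -> uniq T -> a_contained T L a ->
  exists x, enumeration L a x /\ Defs.prefix x (size T) = T.
Proof.
move=> inf uT aC; have [y0 [Ly0 _]] := inf [::].
pose en := fun k => if @unpickle U k is Some y then (if pb (L y) then y else y0) else y0.
have enL : forall k, L (en k).
  by move=> k; rewrite /en; case: unpickle => [y|] //; case: pbP.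
pose x := fun k => if k < size T then nth y0 T k else en (k - size T).
exists x; split; [split|].
- move=> y Ly; exists (size T + pickle y).
  by rewrite /x ltnNge leq_addr /= addKn /en pickleK; case: pbP.
- move=> s us nL.
  have sT : forall k, k \in s -> k < size T.
    move=> k ks; rewrite ltnNge; apply/negP => h; apply: (nL k ks).
    by rewrite /x ltnNge h /=; exact: enL.
  rewrite -(size_map (nth y0 T)); apply: aC.
  + rewrite map_inj_in_uniq // => k1 k2 k1s k2s /eqP.
    by rewrite nth_uniq ?sT // => /eqP.
  + by move=> y /mapP [k ks ->]; exact: mem_nth (sT k ks).
  + by move=> y /mapP [k ks ->]; have := nL k ks; rewrite /x sT.
- rewrite /Defs.prefix /mkseq; apply: (@eq_from_nth _ y0); rewrite size_map size_iota // => k kT.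
  by rewrite (nth_map 0) ?size_iota // nth_iota // add0n /x kT.
Qed.

Lemma size_pos (T : eqType) (a : T) s : a \in s -> 0 < size s.
Proof. by case: s. Qed.

Theorem mainTheorem7 (U : countType)
  (U_infinite : forall s : seq U, exists x : U, x \notin s)
  (C : nat -> U -> Prop)
  (C_langs : forall i, infinite_lang (C i))
  (Hfin : forall t : nat, exists F : seq (nat * nat),
      forall n' j, mstar C n' j + 1 <= t -> (n', j) \in F) :
  exists (G : algorithm U) (tt : nat -> nat -> nat),
    generates_with C G tt /\ pareto_optimal C tt.
Proof.
have [x0 _] := U_infinite [::].
pose tt := fun n i => if mstar C n i == 0 then 0 else (mstar C n i).+1.
pose active := fun (p : seq U) n i => a_contained (undup p) (C i) n /\ tt n i <= size (undup p).
pose G : algorithm U := fun p =>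
  epsilon (inhabits x0) (fun y => y \notin p /\ forall n i, active p n i -> C i y).
exists G, tt; split.
- move=> n i x [enx nx] t t1 sz.
  set p := Defs.prefix x t.
  have actni : active p n i.
    split => // s us sub nL.
    have inp : forall y, y \in s -> y \in p by move=> y /sub; rewrite mem_undup.
    have ix : forall y, y \in s -> x (index y p) = y.
      move=> y ys; have yp := inp y ys.
      rewrite -{2}(nth_index x0 yp) /p /Defs.prefix nth_mkseq //.
      by move: (yp); rewrite -index_mem /Defs.prefix size_mkseq.
    rewrite -(size_map (fun y => index y p) s); apply: nx.
      rewrite map_inj_in_uniq // => y1 y2 y1s y2s e.
      by rewrite -(ix y1 y1s) e ix.
    by move=> k /mapP [y ys ->]; rewrite ix //; exact: nL.
  suff [y [yp yC]] : exists y, y \notin p /\ forall n' j, active p n' j -> C j y.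
    have [h1 h2] : G p \notin p /\ forall n i, active p n i -> C i (G p).
      exact: (epsilon_spec (inhabits x0) (fun y => y \notin p /\ forall n i, active p n i -> C i y) (ex_intro _ y (conj yp yC))).
    by split => //; exact: h2 _ _ actni.
  apply: NNPP => hne.
  set N := size (undup p).
  have [F HF] := Hfin N.+1.
  have actF : forall n' j, active p n' j -> (n', j) \in F.
    move=> n' j [_ h]; apply: HF; move: h; rewrite /tt; case: eqP => [-> _|_ h]; lia.
  pose Dl := filter (fun ab => pb (active p ab.1 ab.2)) F.
  have hDl : forall ab, ab \in Dl -> active p ab.1 ab.2.
    by move=> ab; rewrite mem_filter => /andP [/pbP].
  have niDl : (n, i) \in Dl by rewrite mem_filter actF // andbT; apply/pbP.
  have cov : forall y, (forall ab, ab \in Dl -> C ab.2 y) -> y \in undup p.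
    move=> y h; rewrite mem_undup; apply: NNPP => hy; apply: hne; exists y; split.
      by apply/negP.
    move=> n' j a; apply: (h (n', j)); rewrite mem_filter actF // andbT; exact/pbP.
  pose L := sumn (map (fun ab => (diag_index ab.1 ab.2).+1) Dl).
  have [_ cb memL] := invP C L.
  have sub : {subset Dl <= (noisy_proc C L).1}.
    move=> ab abD; apply/memL; exists (diag_index ab.1 ab.2).
      exact: (mem_sumn (fun ab => (diag_index ab.1 ab.2).+1) abD).
    by rewrite diag_of_index -surjective_pairing.
  have nDl : Dl != [::] by case: (Dl) niDl.
  have [P [e [Q [eS eD sD]]]] := last_in nDl sub.
  have h := cb P e Q eS N.
  have : N <= (noisy_proc C L).2 e.
    apply: h; right; exists (undup p), Dl; split => //.
    - exact: undup_uniq.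
    - by split => //; rewrite last_rcons.
    - by move=> ab /hDl [].
    - by exists (undup p).
  rewrite ms_mstar; last by rewrite eS mem_cat in_cons eqxx orbT.
  have [_ hte] := hDl e eD.
  have Npos : 0 < N.
    apply: (@size_pos _ (x 0)); rewrite mem_undup /p /Defs.prefix /mkseq.
    by apply: map_f; rewrite mem_iota.
  move: hte; rewrite /tt; case: eqP => [-> _|_ h1] h2; lia.
- move=> G' [tt' gen'] n i m [wm lm] mlt.
  set M := mstar C n i.
  have [M0 mM] : M <> 0 /\ m <= M.
    by move: mlt; rewrite /tt -/M; case: eqP => // hM0 mlt.
  set l := diag_index n i.
  have de : diag l = (n, i) := diag_of_index n i.
  have [pw cb mem] := invP C l.
  case E: (insert_loop C (noisy_proc C l).2 (rcons (noisy_proc C l).1 (diag l))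
              (size (noisy_proc C l).1).+1) => [s' m0].
  have eS : diag l \notin (noisy_proc C l).1.
    apply/negP => /mem [l' lt /diag_inj e]; by move: lt; rewrite e ltnn.
  have [_ _ [A' [B' [h1 h2 h3 h4]]]] := roundP eS pw cb E.
  have hM : M = m0.
    by rewrite /M /mstar -/l noisy_procS E /= /upd de eqxx.
  have [chkM maxM] := mchk_spec C (rcons A' (diag l)).
  rewrite -h3 -hM in chkM maxM.
  case: chkM => [//|[T [D [uT sT [sub lD] aC [F cF]]]]].
  rewrite last_rcons in lD.
  have [f [fD fne [m' [lt' Mlt]]]] : exists f, [/\ f \in D, f <> diag l &
      exists m', least_time C G' f.1 f.2 m' /\ M < m'].
    apply: NNPP => hno.
    have works : forall ab, ab \in D -> exists2 k, k <= M & works_at C G' ab.1 ab.2 k.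
      move=> ab abD; case: (eqVneq ab (diag l)) => [->|ne].
        by exists m => //; rewrite de.
      have [m'' lm''] := least_exists (gen' ab.1 ab.2).
      exists m''; last by case: lm''.
      rewrite leqNgt; apply/negP => lt; apply: hno; exists ab; split => //.
        exact/eqP.
      by exists m''.
    have genT : forall ab, ab \in D -> C ab.2 (G' T) /\ G' T \notin T.
      move=> ab abD; have [k kM wk] := works ab abD.
      have [x [enx px]] := enum_from (C_langs ab.2) uT (aC ab abD).
      have := wk x enx (size T).
      rewrite px; apply; first by rewrite sT; lia.
      by rewrite undup_id // sT.
    have : M.+1 <= M.
      apply: maxM; right; exists (G' T :: T), D; split => //.
      - by rewrite /= uT andbT; exact: (proj2 (genT _ lD)).
      - by rewrite /= sT.
      - by split => //; rewrite last_rcons.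
      - move=> ab abD s us ss nL; apply: (aC ab abD s us) => // y ys.
        have := ss y ys; rewrite in_cons => /orP [/eqP ey|//].
        by exfalso; apply: (nL y ys); rewrite ey; exact: (proj1 (genT _ abD)).
      - by exists F.
    by rewrite ltnn.
  exists f.1, f.2, m'; split; first by rewrite -surjective_pairing -de.
  split => //.
  have fA : f \in A'.
    by move: (sub f fD); rewrite mem_rcons in_cons => /orP [/eqP //|].
  have := h4 f fA.
  rewrite ms_mstar; last by rewrite -h2 mem_cat fA.
  rewrite -hM /tt; case: eqP => [->|_] h; lia.
Qed.
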